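(* Let $m\ge 1$ and let $s$ be a spline of degree $m$ with knots $\alpha_0<\alpha_1<\dots<\alpha_n$. Then there exists a compactly supported spline $\bar s$ of degree $m$ such that $\bar s$ coincides with $s$ on $[\alpha_0,\alpha_n]$ and the set of knots of $\bar s$ is contained in $$\{\alpha_0-m,\alpha_0-m+1,\dots,\alpha_0-1\}\cup\{\alpha_0,\alpha_1,\dots,\alpha_n\}\cup\{\alpha_n+1,\dots,\alpha_n+m\}.$$
   Context: A spline of degree $m$ (with finitely many knots) is a function $s\in C^{m-1}(\mathbb{R},\mathbb{R})$ for which there are finitely many points such that on each interval between consecutive such points, and on the two unbounded complementary intervals, $s$ coincides with a polynomial of degree at most $m$. The knots of $s$ are the points at which $s$ is not $C^\infty$. *)

(* Defs.v *)
From Stdlib Require Import Reals List.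
From Coquelicot Require Import Coquelicot.
Open Scope R_scope.

Definition Ck (k : nat) (f : R -> R) : Prop :=
  forall j : nat, (j <= k)%nat -> forall x : R,
    ex_derive_n f j x /\ continuous (Derive_n f j) x.

Definition is_poly_le (m : nat) (p : R -> R) : Prop :=
  exists c : nat -> R, forall x : R, p x = sum_f_R0 (fun i => c i * x ^ i) m.

Definition spline (m : nat) (s : R -> R) : Prop :=
  Ck (m - 1) s /\
  exists pts : list R,
    forall a b : Rbar, Rbar_lt a b ->
      (forall t, In t pts -> ~ (Rbar_lt a t /\ Rbar_lt t b)) ->
      exists p : R -> R, is_poly_le m p /\
        forall x : R, Rbar_lt a x -> Rbar_lt x b -> s x = p x.

Definition smooth_at (f : R -> R) (x : R) : Prop :=
  exists eps : R, 0 < eps /\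
    forall (j : nat) (y : R), Rabs (y - x) < eps -> ex_derive_n f j y.

Definition knot (f : R -> R) (x : R) : Prop := ~ smooth_at f x.

Definition compactly_supported (f : R -> R) : Prop :=
  exists M : R, forall x : R, M < Rabs x -> f x = 0.

(* Main.v *)
Require Import Defs.
From Stdlib Require Import Reals List.
From Coquelicot Require Import Coquelicot.
From Stdlib Require Import Lia Lra Classical FunctionalExtensionality.
Open Scope R_scope.

Lemma near_loc (x : R) (P : R -> Prop) (eps : R) :
  0 < eps -> (forall y, Rabs (y - x) < eps -> P y) -> locally x P.
Proof.
  intros He H. exists (mkposreal eps He). intros y Hy. apply H. exact Hy.
Qed.

Lemma loc_near (x : R) (P : R -> Prop) :
  locally x P -> exists eps, 0 < eps /\ forall y, Rabs (y - x) < eps -> P y.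
Proof.
  intros [e He]. exists e. split. apply cond_pos. intros y Hy. apply He. exact Hy.
Qed.

Lemma Ck_ext k f g : (forall x, f x = g x) -> Ck k f -> Ck k g.
Proof.
  intros E H. replace g with f. exact H. apply functional_extensionality; auto.
Qed.

Lemma Ck_ex k f : Ck k f -> forall y j, (j <= k)%nat -> ex_derive_n f j y.
Proof. intros H y j Hj. apply (H j Hj y). Qed.

Lemma Ck_plus k f g : Ck k f -> Ck k g -> Ck k (fun x => f x + g x).
Proof.
  intros Hf Hg j Hj x. split.
  - apply ex_derive_n_plus; apply filter_forall; intros y k' Hk';
      [apply (Ck_ex k f Hf) | apply (Ck_ex k g Hg)]; lia.
  - apply continuous_ext with (f := fun x => Derive_n f j x + Derive_n g j x).
    + intros y. symmetry. apply Derive_n_plus; apply filter_forall; intros z k' Hk';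
      [apply (Ck_ex k f Hf) | apply (Ck_ex k g Hg)]; lia.
    + apply (continuous_plus (fun x => Derive_n f j x) (fun x => Derive_n g j x)).
      apply (Hf j Hj x). apply (Hg j Hj x).
Qed.

Lemma Ck_scal k a f : Ck k f -> Ck k (fun x => a * f x).
Proof.
  intros Hf j Hj x. split.
  - apply ex_derive_n_scal_l. apply (Hf j Hj x).
  - apply continuous_ext with (f := fun x => a * Derive_n f j x).
    + intros y. symmetry. apply Derive_n_scal_l.
    + apply (continuous_mult (fun _ => a) (fun x => Derive_n f j x)).
      apply continuous_const. apply (Hf j Hj x).
Qed.

Lemma Ck_minus k f g : Ck k f -> Ck k g -> Ck k (fun x => f x - g x).
Proof.
  intros Hf Hg. apply Ck_ext with (f := fun x => f x + (-1) * g x).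
  intros; ring. apply Ck_plus; auto. apply Ck_scal; auto.
Qed.

Lemma Ck_sum k (F : nat -> R -> R) N :
  (forall j, (j <= N)%nat -> Ck k (F j)) -> Ck k (fun x => sum_f_R0 (fun j => F j x) N).
Proof.
  induction N; intros H.
  - simpl. apply H. lia.
  - simpl. apply Ck_plus. apply IHN. intros; apply H; lia. apply H; lia.
Qed.

Lemma Ck_comp_opp k f : Ck k f -> Ck k (fun x => f (- x)).
Proof.
  intros Hf j Hj x. split.
  - apply ex_derive_n_comp_opp. apply filter_forall. intros y k' Hk'.
    apply (Ck_ex k f Hf); lia.
  - apply continuous_ext with (f := fun x => (-1) ^ j * Derive_n f j (- x)).
    + intros y. symmetry. apply Derive_n_comp_opp. apply filter_forall. intros z k' Hk'.
      apply (Ck_ex k f Hf); lia.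
    + apply (continuous_mult (fun _ => (-1)^j) (fun x => Derive_n f j (- x))).
      apply continuous_const.
      apply (continuous_comp (fun x : R => - x) (Derive_n f j)).
      apply (continuous_opp (fun x : R => x)). apply continuous_id.
      apply (Hf j Hj (- x)).
Qed.

Lemma Ck_local k f :
  (forall x, exists g eps, 0 < eps /\ Ck k g /\
       forall y, Rabs (y - x) < eps -> f y = g y) -> Ck k f.
Proof.
  intros H j Hj x. destruct (H x) as [g [eps [He [Hg Hfg]]]].
  assert (L : forall y, Rabs (y - x) < eps -> locally y (fun t => g t = f t)).
  { intros y Hy. apply near_loc with (eps := eps - Rabs (y - x)). lra.
    intros z Hz. symmetry. apply Hfg.
    replace (z - x) with ((z - y) + (y - x)) by ring.
    eapply Rle_lt_trans. apply Rabs_triang. lra. }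
  assert (Hx : Rabs (x - x) < eps) by (rewrite Rminus_diag, Rabs_R0; lra).
  split.
  - apply ex_derive_n_ext_loc with g. apply L; auto. apply (Hg j Hj x).
  - apply continuous_ext_loc with (Derive_n g j).
    + apply near_loc with eps. auto. intros y Hy. apply Derive_n_ext_loc. apply L; auto.
    + apply (Hg j Hj x).
Qed.

Definition Cinf (f : R -> R) := forall j x, ex_derive_n f j x.

Lemma Cinf_Ck k f : Cinf f -> Ck k f.
Proof.
  intros H j _ x. split. apply H.
  exact (@ex_derive_continuous R_AbsRing R_NormedModule (Derive_n f j) x (H (S j) x)).
Qed.

Lemma Cinf_ext f g : (forall x, f x = g x) -> Cinf f -> Cinf g.
Proof.
  intros E H. replace g with f. exact H. apply functional_extensionality; auto.
Qed.

Lemma Cinf_plus f g : Cinf f -> Cinf g -> Cinf (fun x => f x + g x).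
Proof.
  intros Hf Hg j x. apply ex_derive_n_plus; apply filter_forall; intros; auto.
Qed.

Lemma Cinf_scal a f : Cinf f -> Cinf (fun x => a * f x).
Proof. intros Hf j x. apply ex_derive_n_scal_l. auto. Qed.

Lemma Cinf_sumpoly (c : nat -> R) N : Cinf (fun x => sum_f_R0 (fun i => c i * x ^ i) N).
Proof.
  induction N.
  - apply Cinf_ext with (fun x => c 0%nat * x ^ 0). intros; reflexivity.
    apply Cinf_scal. intros j x. apply ex_derive_n_pow.
  - apply Cinf_ext with (fun x => sum_f_R0 (fun i => c i * x ^ i) N + c (S N) * x ^ (S N)).
    intros; reflexivity.
    apply Cinf_plus. exact IHN. apply Cinf_scal. intros j x. apply ex_derive_n_pow.
Qed.

Lemma poly_Cinf m p : is_poly_le m p -> Cinf p.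
Proof.
  intros [c Hc]. apply Cinf_ext with (fun x => sum_f_R0 (fun i => c i * x ^ i) m).
  intros; auto. apply Cinf_sumpoly.
Qed.

Lemma smooth_local f g x eps :
  0 < eps -> (forall y, Rabs (y - x) < eps -> f y = g y) -> smooth_at g x -> smooth_at f x.
Proof.
  intros He Hfg [e [He' Hg]]. exists (Rmin eps e). split. apply Rmin_pos; auto.
  intros j y Hy. apply ex_derive_n_ext_loc with g.
  - apply near_loc with (eps := Rmin eps e - Rabs (y - x)). lra.
    intros z Hz. symmetry. apply Hfg.
    replace (z - x) with ((z - y) + (y - x)) by ring.
    eapply Rle_lt_trans. apply Rabs_triang. pose proof (Rmin_l eps e). lra.
  - apply Hg. pose proof (Rmin_r eps e). lra.
Qed.

Lemma Cinf_smooth f x : Cinf f -> smooth_at f x.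
Proof. intros H. exists 1. split. lra. intros; apply H. Qed.

Lemma smooth_opp f x : smooth_at f (- x) -> smooth_at (fun y => f (- y)) x.
Proof.
  intros [e [He H]]. exists (e / 2). split. lra.
  intros j y Hy. apply ex_derive_n_comp_opp.
  apply near_loc with (e / 2). lra. intros z Hz k Hk. apply H.
  replace (z - - x) with ((z - - y) - (y - x)) by ring.
  eapply Rle_lt_trans. apply Rabs_triang. rewrite Rabs_Ropp. lra.
Qed.

Lemma poly_ext m f g : (forall x, f x = g x) -> is_poly_le m f -> is_poly_le m g.
Proof. intros E [c Hc]. exists c. intros x. rewrite <- E. auto. Qed.

Lemma poly_zero m : is_poly_le m (fun _ => 0).
Proof.
  exists (fun _ => 0). intros x. induction m. simpl; ring. simpl. rewrite <- IHm. ring.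
Qed.

Lemma poly_plus m f g : is_poly_le m f -> is_poly_le m g -> is_poly_le m (fun x => f x + g x).
Proof.
  intros [c Hc] [d Hd]. exists (fun i => c i + d i). intros x.
  rewrite Hc, Hd, <- plus_sum. apply sum_eq. intros; ring.
Qed.

Lemma poly_scal m a f : is_poly_le m f -> is_poly_le m (fun x => a * f x).
Proof.
  intros [c Hc]. exists (fun i => a * c i). intros x.
  rewrite Hc, scal_sum. apply sum_eq. intros; ring.
Qed.

Lemma poly_minus m f g : is_poly_le m f -> is_poly_le m g -> is_poly_le m (fun x => f x - g x).
Proof.
  intros Hf Hg. apply poly_ext with (fun x => f x + (-1) * g x). intros; ring.
  apply poly_plus; auto. apply poly_scal; auto.
Qed.

Lemma poly_shiftpow m t : is_poly_le m (fun x => (x - t) ^ m).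
Proof.
  exists (fun i => Binomial.C m i * (- t) ^ (m - i)). intros x.
  unfold Rminus. rewrite binomial. apply sum_eq. intros; ring.
Qed.

Lemma poly_opp m f : is_poly_le m f -> is_poly_le m (fun x => f (- x)).
Proof.
  intros [c Hc]. exists (fun i => c i * (-1) ^ i). intros x. rewrite Hc.
  apply sum_eq. intros i _. replace (- x) with ((-1) * x) by ring.
  rewrite Rpow_mult_distr. ring.
Qed.

Definition tp (m : nat) (t x : R) : R := (Rmax (x - t) 0) ^ m.

Lemma tp_le m t x : (1 <= m)%nat -> x <= t -> tp m t x = 0.
Proof.
  intros Hm H. unfold tp. rewrite Rmax_right by lra. apply pow_i. lia.
Qed.

Lemma tp_ge m t x : t <= x -> tp m t x = (x - t) ^ m.
Proof. intros H. unfold tp. rewrite Rmax_left by lra. reflexivity. Qed.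

Lemma tp_interval m (t : R) (a b : Rbar) : (1 <= m)%nat ->
  ~ (Rbar_lt a t /\ Rbar_lt t b) ->
  exists q, is_poly_le m q /\ forall x : R, Rbar_lt a x -> Rbar_lt x b -> tp m t x = q x.
Proof.
  intros Hm Ht. destruct (classic (Rbar_lt a t)) as [H|H].
  - assert (Hb : Rbar_le b t) by (apply Rbar_not_lt_le; tauto).
    exists (fun _ => 0). split. apply poly_zero. intros x _ Hx.
    apply tp_le. auto. assert (H0 : Rbar_lt x t) by (eapply Rbar_lt_le_trans; eauto).
    simpl in H0. lra.
  - apply Rbar_not_lt_le in H. exists (fun x => (x - t) ^ m). split. apply poly_shiftpow.
    intros x Hx _. apply tp_ge. assert (H0 : Rbar_lt t x) by (eapply Rbar_le_lt_trans; eauto).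
    simpl in H0. lra.
Qed.

Lemma Rmax0_abs (z : R) : / 2 * (z + Rabs z) = Rmax z 0.
Proof.
  unfold Rmax. destruct (Rle_dec z 0).
  rewrite Rabs_left1 by lra. field. rewrite Rabs_right by lra. field.
Qed.

Lemma continuous_Rmax0 t x : continuous (fun y => Rmax (y - t) 0) x.
Proof.
  apply continuous_ext with (fun y => (/2) * ((y - t) + Rabs (y - t))).
  - intros y. apply Rmax0_abs.
  - apply (continuous_mult (fun _ => /2) (fun y => (y - t) + Rabs (y - t))).
    apply continuous_const.
    apply (continuous_plus (fun y => y - t) (fun y => Rabs (y - t))).
    apply (continuous_minus (fun y : R => y) (fun _ => t)). apply continuous_id. apply continuous_const.
    apply (continuous_Rabs_comp (fun y => y - t)).
    apply (continuous_minus (fun y : R => y) (fun _ => t)). apply continuous_id. apply continuous_const.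
Qed.

Lemma continuous_tp d t x : continuous (tp d t) x.
Proof.
  induction d.
  - unfold tp. simpl. apply continuous_const.
  - apply continuous_ext with (fun y => Rmax (y - t) 0 * tp d t y).
    intros; reflexivity.
    apply (continuous_mult (fun y => Rmax (y - t) 0) (tp d t)). apply continuous_Rmax0. exact IHd.
Qed.

Lemma pow_le_one h k : 0 <= h <= 1 -> h ^ k <= 1.
Proof.
  intros Hh. induction k. simpl; lra. simpl.
  rewrite <- (Rmult_1_r 1). apply Rmult_le_compat; try lra. apply pow_le; lra.
Qed.

Lemma pow_le_self h k : 0 <= h <= 1 -> (1 <= k)%nat -> h ^ k <= h.
Proof.
  intros Hh Hk. destruct k. lia. simpl.
  apply Rle_trans with (h * 1); [apply Rmult_le_compat_l | lra]. lra.
  apply pow_le_one; auto.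
Qed.

Lemma tp_derive d t x : (2 <= d)%nat -> is_derive (tp d t) x (INR d * tp (d - 1) t x).
Proof.
  intros Hd. destruct (Rtotal_order x t) as [Hx|[Hx|Hx]].
  - rewrite (tp_le (d - 1)) by lia || lra. rewrite Rmult_0_r.
    apply is_derive_ext_loc with (fun _ => 0).
    + apply near_loc with (t - x). lra. intros y Hy. symmetry. apply tp_le. lia.
      apply Rabs_def2 in Hy. lra.
    + apply (is_derive_const 0 x).
  - subst x. rewrite (tp_le (d - 1)) by lia || lra. rewrite Rmult_0_r.
    apply is_derive_Reals. intros eps He.
    assert (Hp : 0 < Rmin 1 eps) by (apply Rmin_pos; lra).
    exists (mkposreal _ Hp). intros h Hh0 Hh. simpl in Hh.
    rewrite (tp_le d t t) by lia || lra.
    destruct (Rle_dec h 0) as [Hn|Hn].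
    + rewrite tp_le by lia || lra. replace ((0 - 0) / h - 0) with 0 by (field; lra). rewrite Rabs_R0. lra.
    + rewrite tp_ge by lra. replace (t + h - t) with h by ring.
      destruct d as [|d']. lia.
      replace ((h ^ S d' - 0) / h - 0) with (h ^ d').
      2:{ simpl. field. lra. }
      rewrite Rabs_right. 2:{ apply Rle_ge, pow_le. lra. }
      pose proof (Rmin_l 1 eps). pose proof (Rmin_r 1 eps).
      rewrite Rabs_right in Hh by lra.
      eapply Rle_lt_trans. apply pow_le_self. lra. lia. lra.
  - rewrite (tp_ge (d - 1)) by lra.
    apply is_derive_ext_loc with (fun y => (y - t) ^ d).
    + apply near_loc with (x - t). lra. intros y Hy. symmetry. apply tp_ge.
      apply Rabs_def2 in Hy. lra.
    + auto_derive. auto. rewrite Nat.sub_1_r, Rmult_1_l. reflexivity.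
Qed.

Fixpoint ff (m j : nat) : R :=
  match j with O => 1 | S j' => ff m j' * INR (m - j') end.

Lemma tp_Dn m t j : (1 <= m)%nat -> (j <= m - 1)%nat ->
  (forall x, Derive_n (tp m t) j x = ff m j * tp (m - j) t x) /\
  (forall x, ex_derive_n (tp m t) j x).
Proof.
  intros Hm. induction j; intros Hj.
  - split. intros x. simpl. rewrite Nat.sub_0_r. ring. intros x. exact I.
  - destruct IHj as [IH1 IH2]. lia.
    assert (E : Derive_n (tp m t) j = fun y => ff m j * tp (m - j) t y).
    { apply functional_extensionality. exact IH1. }
    assert (D : forall x, is_derive (Derive_n (tp m t) j) x
                  (ff m j * (INR (m - j) * tp (m - S j) t x))).
    { intros x. rewrite E. apply is_derive_scal.
      replace (m - S j)%nat with (m - j - 1)%nat by lia. apply tp_derive. lia. }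
    split.
    + intros x. change (Derive (Derive_n (tp m t) j) x = ff m (S j) * tp (m - S j) t x).
      rewrite (is_derive_unique _ _ _ (D x)). simpl. ring.
    + intros x. change (ex_derive (Derive_n (tp m t) j) x). eexists. apply D.
Qed.

Lemma Ck_tp m t : (1 <= m)%nat -> Ck (m - 1) (tp m t).
Proof.
  intros Hm j Hj x. destruct (tp_Dn m t j Hm Hj) as [H1 H2]. split. auto.
  apply continuous_ext with (fun y => ff m j * tp (m - j) t y).
  intros; symmetry; auto.
  apply (continuous_mult (fun _ => ff m j) (tp (m - j) t)). apply continuous_const.
  apply continuous_tp.
Qed.

Lemma vandermonde N (y e : nat -> R) :
  (forall j k, (j <= N)%nat -> (k <= N)%nat -> j <> k -> y j <> y k) ->
  exists c : nat -> R, forall i, (i <= N)%nat -> sum_f_R0 (fun j => c j * y j ^ i) N = e i.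
Proof.
  revert e. induction N; intros e Hy.
  - exists (fun _ => e 0%nat). intros i Hi. assert (i = 0%nat) by lia. subst. simpl. ring.
  - destruct (IHN (fun i => e (S i) - y (S N) * e i)) as [d Hd].
    { intros j k Hj Hk. apply Hy; lia. }
    set (c := fun j => if (j <=? N)%nat then d j / (y j - y (S N))
                       else e 0%nat - sum_f_R0 (fun j => d j / (y j - y (S N))) N).
    assert (Hne : forall j, (j <= N)%nat -> y j - y (S N) <> 0).
    { intros j Hj. intro H. apply (Hy j (S N)); try lia. lra. }
    assert (Hcj : forall j, (j <= N)%nat -> c j = d j / (y j - y (S N))).
    { intros j Hj. unfold c. apply Nat.leb_le in Hj. rewrite Hj. reflexivity. }
    assert (HcS : c (S N) = e 0%nat - sum_f_R0 (fun j => d j / (y j - y (S N))) N).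
    { unfold c. assert ((S N <=? N)%nat = false) as -> by (apply Nat.leb_gt; lia). reflexivity. }
    exists c. intros i. induction i; intros Hi.
    + simpl sum_f_R0 at 1. rewrite HcS.
      rewrite (sum_eq _ (fun j => d j / (y j - y (S N)))). simpl. ring.
      intros j Hj. rewrite Hcj by auto. simpl. ring.
    + assert (IHi' := IHi ltac:(lia)).
      transitivity (sum_f_R0 (fun j => c j * y j ^ i * (y j - y (S N))) (S N)
                    + y (S N) * sum_f_R0 (fun j => c j * y j ^ i) (S N)).
      { rewrite scal_sum, <- plus_sum. apply sum_eq. intros j _. simpl. ring. }
      rewrite IHi'. simpl sum_f_R0 at 1.
      rewrite (sum_eq _ (fun j => d j * y j ^ i)).
      rewrite Hd by lia. ring.
      intros j Hj. rewrite Hcj by auto. field. auto.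
Qed.

Lemma sum_swap (F : nat -> nat -> R) M N :
  sum_f_R0 (fun j => sum_f_R0 (fun i => F i j) M) N =
  sum_f_R0 (fun i => sum_f_R0 (fun j => F i j) N) M.
Proof.
  induction N.
  - simpl. apply sum_eq. intros; reflexivity.
  - simpl. rewrite IHN. rewrite <- plus_sum. apply sum_eq. intros; reflexivity.
Qed.

Lemma C_pos m i : (i <= m)%nat -> 0 < Binomial.C m i.
Proof.
  intros H. unfold Binomial.C. apply Rdiv_lt_0_compat. apply INR_fact_lt_0.
  apply Rmult_lt_0_compat; apply INR_fact_lt_0.
Qed.

Lemma repr m (b : nat -> R) (a : R) : exists c : nat -> R, forall x,
  sum_f_R0 (fun i => b i * x ^ i) m = sum_f_R0 (fun j => c j * (x - (a + INR j)) ^ m) m.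
Proof.
  destruct (vandermonde m (fun j => - (a + INR j)) (fun i => b (m - i)%nat / Binomial.C m (m - i)))
    as [c Hc].
  { intros j k _ _ Hjk H. apply Hjk. apply INR_eq. lra. }
  exists c. intros x.
  transitivity (sum_f_R0 (fun j => sum_f_R0 (fun i =>
      c j * (Binomial.C m i * x ^ i * (- (a + INR j)) ^ (m - i))) m) m).
  2:{ apply sum_eq. intros j _. unfold Rminus. rewrite binomial, scal_sum.
      apply sum_eq. intros; ring. }
  rewrite sum_swap. apply sum_eq. intros i Hi.
  transitivity (Binomial.C m i * x ^ i *
     sum_f_R0 (fun j => c j * (- (a + INR j)) ^ (m - i)) m).
  - rewrite Hc by lia. replace (m - (m - i))%nat with i by lia.
    pose proof (C_pos m i Hi). field. lra.
  - rewrite scal_sum. apply sum_eq. intros; ring.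
Qed.

Lemma avoid (l : list R) x : exists eps, 0 < eps /\
  forall t, In t l -> t <> x -> eps <= Rabs (t - x).
Proof.
  induction l as [|t0 l IH].
  - exists 1. split. lra. intros t [].
  - destruct IH as [e [He H]]. destruct (Req_dec t0 x) as [E|E].
    + exists e. split. auto. intros t [<-|Ht] Hne. contradiction. auto.
    + exists (Rmin e (Rabs (t0 - x))). split. apply Rmin_pos. auto.
      apply Rabs_pos_lt. lra.
      intros t [<-|Ht] Hne. apply Rmin_r. eapply Rle_trans. apply Rmin_l. auto.
Qed.

Definition knl (a : R) (m : nat) : list R := map (fun j => a + INR j) (seq 0 (S m)).

Lemma knl_in a m j : (j <= m)%nat -> In (a + INR j) (knl a m).
Proof. intros H. unfold knl. apply in_map_iff. exists j. split. reflexivity. apply in_seq. lia. Qed.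

Lemma knl_inv a m t : In t (knl a m) -> exists j, (j <= m)%nat /\ t = a + INR j.
Proof.
  unfold knl. intros H. apply in_map_iff in H. destruct H as [j [<- Hj]].
  apply in_seq in Hj. exists j. split. lia. reflexivity.
Qed.

Lemma sum_zero (F : nat -> R) N : (forall j, (j <= N)%nat -> F j = 0) -> sum_f_R0 F N = 0.
Proof.
  intros H. rewrite (sum_eq _ (fun _ => 0)) by auto. rewrite sum_cte. ring.
Qed.

Lemma right_cut m f a : (1 <= m)%nat -> spline m f -> exists g,
  spline m g /\ (forall x, x <= a -> g x = f x) /\ (forall x, a + INR m <= x -> g x = 0) /\
  (forall x, x < a -> smooth_at f x -> smooth_at g x) /\
  (forall x, a < x -> (forall k, (1 <= k <= m)%nat -> x <> a + INR k) -> smooth_at g x).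
Proof.
  intros Hm [Hck [pts Hpts]].
  destruct (avoid pts a) as [eps [He Hav]].
  destruct (Hpts (Finite a) (Finite (a + eps))) as [p [Hpp Hfp]].
  { simpl. lra. }
  { intros t Ht [H1 H2]. simpl in H1, H2. assert (t <> a) by lra.
    specialize (Hav t Ht H). rewrite Rabs_right in Hav by lra. lra. }
  destruct Hpp as [b Hb].
  destruct (repr m b a) as [c Hc].
  set (Rf := fun x => sum_f_R0 (fun j => c j * tp m (a + INR j) x) m).
  set (g := fun x => if Rle_dec x a then f x else p x - Rf x).
  assert (HR0 : forall x, x <= a -> Rf x = 0).
  { intros x Hx. unfold Rf. apply sum_zero. intros j Hj. rewrite tp_le. ring. auto.
    pose proof (pos_INR j). lra. }
  assert (HRbig : forall x, a + INR m <= x -> Rf x = p x).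
  { intros x Hx. rewrite Hb, Hc. unfold Rf. apply sum_eq. intros j Hj.
    rewrite tp_ge. reflexivity. pose proof (le_INR _ _ Hj). lra. }
  assert (HRpoly : forall lo hi : Rbar,
            (forall j, (j <= m)%nat -> ~ (Rbar_lt lo (a + INR j) /\ Rbar_lt (a + INR j) hi)) ->
            exists q, is_poly_le m q /\ forall x : R, Rbar_lt lo x -> Rbar_lt x hi -> Rf x = q x).
  { intros lo hi Hav2.
    assert (G : forall N, (N <= m)%nat -> exists q, is_poly_le m q /\
               forall x : R, Rbar_lt lo x -> Rbar_lt x hi ->
               sum_f_R0 (fun j => c j * tp m (a + INR j) x) N = q x).
    { induction N; intros HN.
      - destruct (tp_interval m (a + INR 0) lo hi Hm (Hav2 0%nat ltac:(lia))) as [q [Hq Hq2]].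
        exists (fun x => c 0%nat * q x). split. apply poly_scal; auto.
        intros x H1 H2. simpl. rewrite Hq2; auto.
      - destruct (IHN ltac:(lia)) as [q1 [Hq1 Hq1']].
        destruct (tp_interval m (a + INR (S N)) lo hi Hm (Hav2 (S N) HN)) as [q [Hq Hq2]].
        exists (fun x => q1 x + c (S N) * q x). split. apply poly_plus; auto. apply poly_scal; auto.
        intros x H1 H2. simpl. rewrite Hq1', Hq2; auto. }
    apply G. lia. }
  assert (HckR : Ck (m - 1) Rf).
  { apply Ck_sum. intros j _. apply Ck_scal. apply Ck_tp. auto. }
  assert (Hpoly : is_poly_le m p) by (exists b; auto).
  assert (Hckp : Ck (m - 1) p) by (apply Cinf_Ck; eapply poly_Cinf; eauto).
  assert (Hg1 : forall x, x <= a -> g x = f x).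
  { intros x Hx. unfold g. destruct (Rle_dec x a). auto. lra. }
  assert (Hg2 : forall x, a < x -> g x = p x - Rf x).
  { intros x Hx. unfold g. destruct (Rle_dec x a). lra. auto. }
  exists g. split; [split|split; [|split; [|split]]].
  -
    apply Ck_local. intros x. destruct (Rtotal_order x a) as [Hx|[Hx|Hx]].
    + exists f, (a - x). split. lra. split. auto. intros y Hy. apply Hg1.
      apply Rabs_def2 in Hy. lra.
    + exists (fun y => f y - Rf y), eps. split. auto. split. apply Ck_minus; auto.
      intros y Hy. apply Rabs_def2 in Hy. destruct (Rle_dec y a).
      * rewrite Hg1, HR0 by auto. ring.
      * rewrite Hg2 by lra. rewrite Hfp. auto. simpl; lra. simpl; lra.
    + exists (fun y => p y - Rf y), (x - a). split. lra. split. apply Ck_minus; auto.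
      intros y Hy. apply Hg2. apply Rabs_def2 in Hy. lra.
  -
    exists (pts ++ knl a m). intros lo hi Hlh Hav3.
    destruct (classic (Rbar_lt lo a)) as [Hlo|Hlo].
    + assert (Hhi : Rbar_le hi a).
      { apply Rbar_not_lt_le. intro H. apply (Hav3 a). apply in_or_app. right.
        replace a with (a + INR 0) at 1 by (simpl; ring). apply knl_in. lia. auto. }
      destruct (Hpts lo hi Hlh) as [q [Hq Hq2]].
      { intros t Ht. apply Hav3. apply in_or_app. auto. }
      exists q. split. auto. intros x H1 H2. rewrite Hg1. auto.
      assert (H3 : Rbar_lt x a) by (eapply Rbar_lt_le_trans; eauto). simpl in H3. lra.
    + apply Rbar_not_lt_le in Hlo.
      destruct (HRpoly lo hi) as [q [Hq Hq2]].
      { intros j Hj. apply Hav3. apply in_or_app. right. apply knl_in. auto. }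
      exists (fun x => p x - q x). split. apply poly_minus; auto.
      intros x H1 H2. assert (H3 : Rbar_lt a x) by (eapply Rbar_le_lt_trans; eauto). simpl in H3.
      rewrite Hg2, Hq2; auto.
  - exact Hg1.
  - intros x Hx. pose proof (lt_0_INR m ltac:(lia)). rewrite Hg2 by lra.
    rewrite HRbig; auto. ring.
  - intros x Hx Hs. apply smooth_local with f (a - x). lra. intros y Hy. apply Hg1.
    apply Rabs_def2 in Hy. lra. auto.
  - intros x Hx Hk. destruct (avoid (knl a m) x) as [e1 [He1 Hav1]].
    set (e := Rmin e1 (x - a)).
    assert (He0 : 0 < e) by (apply Rmin_pos; lra).
    assert (Hee1 : e <= e1) by apply Rmin_l. assert (Hee2 : e <= x - a) by apply Rmin_r.
    destruct (HRpoly (Finite (x - e)) (Finite (x + e))) as [q [Hq Hq2]].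
    { intros j Hj [H1 H2]. simpl in H1, H2.
      destruct (Req_dec (a + INR j) x) as [E|E].
      - destruct j. simpl in E. lra. apply (Hk (S j)). lia. auto.
      - specialize (Hav1 _ (knl_in a m j Hj) E). assert (Rabs (a + INR j - x) < e1) by (apply Rabs_def1; lra). lra. }
    apply smooth_local with (fun y => p y - q y) e. auto.
    + intros y Hy. apply Rabs_def2 in Hy. rewrite Hg2 by lra. rewrite Hq2. auto.
      simpl; lra. simpl; lra.
    + apply Cinf_smooth. eapply poly_Cinf. apply poly_minus; eauto.
Qed.

Lemma rbar_opp_between (lo hi : Rbar) (t : R) :
  Rbar_lt lo t -> Rbar_lt t hi -> Rbar_lt (Rbar_opp hi) (- t) /\ Rbar_lt (- t) (Rbar_opp lo).
Proof.
  destruct lo as [l| |]; destruct hi as [h| |]; simpl; intros; split; auto; lra.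
Qed.

Lemma spline_opp m f : spline m f -> spline m (fun x => f (- x)).
Proof.
  intros [Hck [pts H]]. split. apply Ck_comp_opp; auto.
  exists (map Ropp pts). intros lo hi Hlh Hav.
  destruct (H (Rbar_opp hi) (Rbar_opp lo)) as [q [Hq Hq2]].
  { apply Rbar_opp_lt. auto. }
  { intros t Ht [H1 H2]. apply (Hav (- t)). apply in_map. auto.
    destruct lo as [l| |]; destruct hi as [h| |]; simpl in *; split; auto; lra. }
  exists (fun x => q (- x)). split. apply poly_opp; auto.
  intros x H1 H2. destruct (rbar_opp_between lo hi x H1 H2). apply Hq2; auto.
Qed.

Theorem mainTheorem5 (m n : nat) (s : R -> R) (alpha : nat -> R) :
  (1 <= m)%nat ->
  spline m s ->
  (forall i : nat, (i < n)%nat -> alpha i < alpha (S i)) ->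
  (forall x : R, knot s x <-> exists i : nat, (i <= n)%nat /\ x = alpha i) ->
  exists sbar : R -> R,
    spline m sbar /\ compactly_supported sbar /\
    (forall x : R, alpha 0%nat <= x <= alpha n -> sbar x = s x) /\
    (forall x : R, knot sbar x ->
       (exists k : nat, (1 <= k <= m)%nat /\ x = alpha 0%nat - INR k) \/
       (exists i : nat, (i <= n)%nat /\ x = alpha i) \/
       (exists k : nat, (1 <= k <= m)%nat /\ x = alpha n + INR k)).
Proof.
  intros Hm Hs Hmono Hknot.
  assert (Hord : forall i, (i <= n)%nat -> alpha 0%nat <= alpha i).
  { induction i; intros Hi. lra. specialize (Hmono i ltac:(lia)). specialize (IHi ltac:(lia)). lra. }
  pose proof (Hord n (le_n n)) as H0n.
  pose proof (lt_0_INR m ltac:(lia)) as Hmpos.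
  destruct (right_cut m s (alpha n) Hm Hs) as [s1 [Hs1 [Hs1a [Hs1b [Hs1c Hs1d]]]]].
  set (f2 := fun x => s1 (- x)).
  destruct (right_cut m f2 (- alpha 0%nat) Hm (spline_opp m s1 Hs1))
    as [s3 [Hs3 [Hs3a [Hs3b [Hs3c Hs3d]]]]].
  exists (fun x => s3 (- x)). split; [|split; [|split]].
  - apply spline_opp. auto.
  - exists (Rmax (Rabs (alpha n + INR m)) (Rabs (alpha 0%nat - INR m))).
    intros x Hx.
    pose proof (Rmax_l (Rabs (alpha n + INR m)) (Rabs (alpha 0%nat - INR m))).
    pose proof (Rmax_r (Rabs (alpha n + INR m)) (Rabs (alpha 0%nat - INR m))).
    pose proof (Rle_abs (alpha n + INR m)).
    pose proof (Rle_abs (- (alpha 0%nat - INR m))) as H3.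
    rewrite Rabs_Ropp in H3.
    destruct (Rle_dec 0 x).
    + rewrite (Rabs_right x) in Hx by lra. rewrite Hs3a by lra. unfold f2.
      rewrite Ropp_involutive. apply Hs1b. lra.
    + rewrite (Rabs_left x) in Hx by lra. apply Hs3b. lra.
  - intros x Hx. rewrite Hs3a by lra. unfold f2. rewrite Ropp_involutive. apply Hs1a. lra.
  - intros x Hkn. apply NNPP. intro Hno. apply Hkn.
    assert (N1 : forall k, (1 <= k <= m)%nat -> x <> alpha 0%nat - INR k).
    { intros k Hk E. apply Hno. left. exists k. auto. }
    assert (N2 : forall i, (i <= n)%nat -> x <> alpha i).
    { intros i Hi E. apply Hno. right. left. exists i. auto. }
    assert (N3 : forall k, (1 <= k <= m)%nat -> x <> alpha n + INR k).
    { intros k Hk E. apply Hno. right. right. exists k. auto. }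
    apply smooth_opp.
    destruct (Rtotal_order x (alpha 0%nat)) as [Hx|[Hx|Hx]].
    + apply Hs3d. lra. intros k Hk E. apply (N1 k Hk). lra.
    + exfalso. apply (N2 0%nat). lia. auto.
    + apply Hs3c. lra. unfold f2. apply smooth_opp. rewrite Ropp_involutive.
      destruct (Rtotal_order x (alpha n)) as [Hy|[Hy|Hy]].
      * apply Hs1c. auto. apply NNPP. intro Hk. apply Hknot in Hk.
        destruct Hk as [i [Hi E]]. apply (N2 i Hi E).
      * exfalso. apply (N2 n). lia. auto.
      * apply Hs1d. auto. auto.
Qed.
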